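(* The sets $H_\pm$ intersect $\partial(T^*E_{2\delta_0}\times\mathbb{R})\subset J^1(S)$ transversely. Moreover, $H_\pm(2\delta_0)$ is invariant under the Reeb flow of $dz-p\,dq$, and its projection $\overline H_\pm(2\delta_0)\subset T^*E_{2\delta_0}$ is a smooth $J_0$-complex subvariety.
   Context: $\alpha_0=dx_3-x_2\,dx_1+x_1\,dx_2$ on $\mathbb{R}^3$. Fix $\delta_0>0$ and let $S\subset\mathbb{R}^3$ be the smooth boundary of a compact convex set containing the origin in its interior, symmetric under reflection in the $y_1y_2$-plane and rotations about the $y_3$-axis, such that $S\cap\{y_1^2+y_2^2\le 9\delta_0^2\}=\{(y_1,y_2,\pm1): y_1^2+y_2^2\le 9\delta_0^2\}$; $\nu$ is the outward unit normal. For $0<k<3$ put $E_{k\delta_0}=\{(y_1,y_2,\pm1): y_1^2+y_2^2\le k^2\delta_0^2\}\subset S$. $S^*\mathbb{R}^3=\mathbb{R}^3\times S$ (contact form $y\cdot dx$) is identified with $J^1(S)=T^*S\times\mathbb{R}$ (contact form $dz-p\,dq$, $p\in T_qS$) via $(x,y)\mapsto(y,x-(x\cdot\nu(y))\nu(y),x\cdot y)$. $H_\pm=\{(x,y)\in S^*\mathbb{R}^3: y=t(-x_2,x_1,1),\ \pm t>0\}$, viewed in $J^1(S)$; $H_\pm(k\delta_0)=H_\pm\cap(T^*E_{k\delta_0}\times\mathbb{R})$; bars denote images under the projection $J^1(S)\to T^*S$. $J_0$ is the standard integrable complex structure on $T^*E_{3\delta_0}$ via the identification $((u_1,u_2,\pm1),(v_1,v_2,0))\mapsto(u_1+iv_1,u_2+iv_2)\in\mathbb{C}^2$.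 *)

(* Defs.v *)
From mathcomp Require Import all_boot all_algebra.
From mathcomp Require Import all_classical all_reals all_analysis.
Import GRing.Theory Num.Theory numFieldNormedType.Exports.
Local Open Scope ring_scope.
Local Open Scope classical_set_scope.

Set Implicit Arguments.
Unset Strict Implicit.
Unset Printing Implicit Defensive.

Section Defs.
Variable R : realType.

Definition vec3 (a b c : R) : 'rV[R]_3 := \row_(i < 3) nth 0 [:: a; b; c] i.
(* the i-th coordinate (i = 0,1,2 stands for y_1, y_2, y_3 of the paper) *)
Definition cx (y : 'rV[R]_3) (i : nat) : R := y ord0 (inord i).
Definition dot3 (x y : 'rV[R]_3) : R := \sum_(i < 3) x ord0 i * y ord0 i.

Definition is_convex (K : set 'rV[R]_3) :=
  forall a b, K a -> K b -> forall t : R, 0 <= t <= 1 -> K ((1 - t) *: a + t *: b).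

(* topological boundary of a closed set *)
Definition bdry (K : set 'rV[R]_3) : set 'rV[R]_3 := K `\` interior K.

(* iterated directional derivatives; C^infinity = Frechet differentiable
   to all orders *)
Fixpoint iterD (vs : seq 'rV[R]_3) (f : 'rV[R]_3 -> R) : 'rV[R]_3 -> R :=
  match vs with
  | [::] => f
  | v :: vs' => fun x => 'D_v (iterD vs' f) x
  end.
Definition smooth3 (f : 'rV[R]_3 -> R) :=
  forall (vs : seq 'rV[R]_3) (x : 'rV[R]_3), differentiable (iterD vs f) x.

Definition grad (f : 'rV[R]_3 -> R) (y : 'rV[R]_3) : 'rV[R]_3 :=
  \row_(i < 3) 'D_(delta_mx ord0 i) f y.

(* outward unit normal of S = {rho = 0} = bdry {rho <= 0} *)
Definition nu_of (rho : 'rV[R]_3 -> R) (y : 'rV[R]_3) : 'rV[R]_3 :=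
  (Num.sqrt (dot3 (grad rho y) (grad rho y)))^-1 *: grad rho y.

Definition reflect12 (y : 'rV[R]_3) := vec3 (cx y 0) (cx y 1) (- cx y 2).
Definition rot3 (th : R) (y : 'rV[R]_3) :=
  vec3 (cos th * cx y 0 - sin th * cx y 1) (sin th * cx y 0 + cos th * cx y 1)
       (cx y 2).

Definition Edisk (k d0 : R) : set 'rV[R]_3 :=
  [set y | (cx y 2 = 1 \/ cx y 2 = -1) /\
           cx y 0 ^+ 2 + cx y 1 ^+ 2 <= k ^+ 2 * d0 ^+ 2].

(** * J^1(S) = T^*S x R, realised as {(q,p,z) | q in S, p in T_qS} in R^3 x R^3 x R *)
Definition Jt := ('rV[R]_3 * 'rV[R]_3 * R)%type.
Definition jq (m : Jt) : 'rV[R]_3 := m.1.1.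
Definition jp (m : Jt) : 'rV[R]_3 := m.1.2.
Definition jz (m : Jt) : R := m.2.

Definition J1 (rho : 'rV[R]_3 -> R) (S : set 'rV[R]_3) : set Jt :=
  [set m | S (jq m) /\ dot3 (jp m) (nu_of rho (jq m)) = 0].

(* the identification S^*R^3 = R^3 x S  -> J^1(S) *)
Definition jet_map (rho : 'rV[R]_3 -> R) (x y : 'rV[R]_3) : Jt :=
  (y, x - dot3 x (nu_of rho y) *: nu_of rho y, dot3 x y).

(* H_+ for sgn = 1, H_- for sgn = -1 *)
Definition Hset (rho : 'rV[R]_3 -> R) (S : set 'rV[R]_3) (sgn : R) : set Jt :=
  [set m | exists (x y : 'rV[R]_3) (t : R),
     S y /\ 0 < sgn * t /\ y = t *: vec3 (- cx x 1) (cx x 0) 1 /\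
     m = jet_map rho x y].

Definition TEx (rho : 'rV[R]_3 -> R) (S : set 'rV[R]_3) (k d0 : R) : set Jt :=
  [set m | J1 rho S m /\ Edisk k d0 (jq m)].

Definition Hk rho S sgn k d0 : set Jt := Hset rho S sgn `&` TEx rho S k d0.

Definition rel_boundary (X A : set Jt) : set Jt :=
  [set m | X m /\ forall U : set Jt, nbhs m U ->
     (exists a, A a /\ U a) /\ (exists b, X b /\ ~ A b /\ U b)].

Definition tangent_cone (A : set Jt) (m : Jt) : set Jt :=
  [set w | exists (g : R -> Jt) (e : R), 0 < e /\ g 0 = m /\
     (forall t, `|t| < e -> A (g t)) /\ derivable g 0 1 /\ 'D_1 g 0 = w].

Definition transverse (X A B : set Jt) :=
  forall m, A m -> B m -> forall w, tangent_cone X m w ->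
    exists a b, tangent_cone A m a /\ tangent_cone B m b /\ w = a + b.

(* contact form dz - p dq and its differential -dp /\ dq *)
Definition alpha (m w : Jt) : R := jz w - dot3 (jp m) (jq w).
Definition dalpha (v w : Jt) : R := dot3 (jp w) (jq v) - dot3 (jp v) (jq w).

Definition reeb_field (X : set Jt) (Rf : Jt -> Jt) :=
  forall m, X m -> tangent_cone X m (Rf m) /\ alpha m (Rf m) = 1 /\
    forall w, tangent_cone X m w -> dalpha (Rf m) w = 0.

Definition reeb_invariant (X A : set Jt) :=
  forall Rf, reeb_field X Rf ->
  forall (g : R -> Jt) (T : R), 0 < T ->
    (forall t, `|t| < T -> X (g t) /\ derivable g t 1 /\ 'D_1 g t = Rf (g t)) ->
    A (g 0) -> forall t, `|t| < T -> A (g t).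

Definition TS := ('rV[R]_3 * 'rV[R]_3)%type.
Definition proj_set (A : set Jt) : set TS := [set qp | exists m, A m /\ qp = (jq m, jp m)].

(* C^n as (real parts, imaginary parts) *)
Definition Cn (n : nat) := ('rV[R]_n * 'rV[R]_n)%type.
Definition Jc (n : nat) (c : Cn n) : Cn n := (- c.2, c.1).  (* mult. by i *)

(* the chart ((u1,u2,s),(v1,v2,0)) |-> (u1 + i v1, u2 + i v2) *)
Definition chart (qp : TS) : Cn 2 :=
  (\row_(j < 2) qp.1 ord0 (widen_ord (isT : 2 <= 3)%N j),
   \row_(j < 2) qp.2 ord0 (widen_ord (isT : 2 <= 3)%N j)).

Definition sheet_image (A : set TS) (s : R) : set (Cn 2) :=
  [set c | exists qp, A qp /\ cx qp.1 2 = s /\ c = chart qp].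

Definition TE (rho : 'rV[R]_3 -> R) (k d0 : R) : set TS :=
  [set qp | Edisk k d0 qp.1 /\ dot3 qp.2 (nu_of rho qp.1) = 0].

(* A is a smooth complex subvariety of the region Om of C^2:
   locally, A is the intersection of Om with the regular zero set of a
   holomorphic map (complex differentiable = real differentiable with
   C-linear differential) *)
Definition complex_subvariety (Om A : set (Cn 2)) :=
  A `<=` Om /\
  forall a, A a -> exists (k : nat) (U : set (Cn 2)) (f : Cn 2 -> Cn k),
    open U /\ U a /\
    (forall c, U c -> differentiable f c /\
       forall v, 'd f c (Jc v) = Jc ('d f c v)) /\
    (forall w : Cn k, exists v, 'd f a v = w) /\
    (forall c, U c -> (A c <-> Om c /\ f c = 0)).

End Defs.

(* Main.v *)
From HB Require Import structures.
Require Import Defs.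
From mathcomp Require Import all_boot all_algebra.
From mathcomp Require Import all_classical all_reals all_analysis.
From mathcomp Require Import ring lra.
Import GRing.Theory Num.Theory numFieldNormedType.Exports.
Import order.Order.TTheory.

Local Open Scope ring_scope.
Local Open Scope classical_set_scope.

Section Basics.
Variable R : realType.
Implicit Types (x y : 'rV[R]_3).

Lemma cxE x (j : 'I_3) : x ord0 j = cx x j.
Proof. by rewrite /cx; congr (x _ _); apply/val_inj; rewrite /= inordK. Qed.

Lemma cx_vec3 (a b c : R) :
  [/\ cx (vec3 a b c) 0 = a, cx (vec3 a b c) 1 = b & cx (vec3 a b c) 2 = c].
Proof. by rewrite /cx /vec3 !mxE !inordK. Qed.

Lemma cxD x y i : cx (x + y) i = cx x i + cx y i.
Proof. by rewrite /cx !mxE. Qed.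
Lemma cxB x y i : cx (x - y) i = cx x i - cx y i.
Proof. by rewrite /cx !mxE. Qed.
Lemma cxZ (k : R) x i : cx (k *: x) i = k * cx x i.
Proof. by rewrite /cx !mxE. Qed.
Lemma cx0 i : cx (0 : 'rV[R]_3) i = 0.
Proof. by rewrite /cx !mxE. Qed.

Lemma rowP3 x y : cx x 0 = cx y 0 -> cx x 1 = cx y 1 -> cx x 2 = cx y 2 -> x = y.
Proof.
move=> h0 h1 h2; apply/rowP => -[[|[|[|k]]] Hj].
- by rewrite (_ : Ordinal Hj = inord 0) //; apply/val_inj; rewrite /= inordK.
- by rewrite (_ : Ordinal Hj = inord 1) //; apply/val_inj; rewrite /= inordK.
- by rewrite (_ : Ordinal Hj = inord 2) //; apply/val_inj; rewrite /= inordK.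
- by [].
Qed.

Lemma dot3E x y : dot3 x y = cx x 0 * cx y 0 + cx x 1 * cx y 1 + cx x 2 * cx y 2.
Proof. by rewrite /dot3 !big_ord_recr big_ord0 /= add0r !cxE. Qed.

Lemma cx_norm x i : (i < 3)%N -> `|cx x i| <= `|x|.
Proof.
move=> hi; rewrite [X in _ <= X]/Num.Def.normr /= mx_normrE /cx.
exact: (le_bigmax _ _ (ord0, inord i)).
Qed.

Lemma normJq (m : Jt R) : `|jq m| <= `|m|.
Proof. by rewrite /jq !prod_normE !le_max lexx /=. Qed.
Lemma normJp (m : Jt R) : `|jp m| <= `|m|.
Proof. by rewrite /jp !prod_normE !le_max lexx /= orbT. Qed.
Lemma normJz (m : Jt R) : `|jz m| <= `|m|.
Proof. by rewrite /jz !prod_normE !le_max lexx /= orbT. Qed.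


Lemma nbhs_normP (V : normedModType R) (x : V) (P : set V) :
  nbhs x P <-> exists2 e, 0 < e & forall z, `|x - z| < e -> P z.
Proof.
rewrite nbhs_ballP; split => -[e e0 H]; exists e => // z.
- by move=> h; apply: H; rewrite -ball_normE.
- by rewrite -ball_normE => /H.
Qed.

Lemma near0_dnbhs (P : set R) :
  (\forall h \near (0:R), P h) -> \forall h \near (0:R)^', P h.
Proof. by move=> H; apply: cvg_within; exact: H. Qed.

Lemma cont_eps (V : normedModType R) (f : R -> V) t :
  {for t, continuous f} ->
  forall e, 0 < e -> exists2 d, 0 < d & forall s, `|t - s| < d -> `|f t - f s| < e.
Proof.
move=> cf e e0; have H : \forall s \near t, `|f t - f s| < e.
  exact: (@cvgrPdist_lt R V R (nbhs t) _ f (f t)).1 cf e e0.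
have [d d0 Hd] := (@nbhs_normP R^o t _).1 H.
by exists d.
Qed.

Lemma lin_derive (V : normedModType R) (c : V -> R) (g : R -> V) t :
  (forall a b, c (a - b) = c a - c b) -> (forall k a, c (k *: a) = k * c a) ->
  (forall a, `|c a| <= `|a|) ->
  derivable g t 1 -> is_derive t 1 (c \o g) (c ('D_1 g t)).
Proof.
move=> cB cZ cN dg.
have hq : (fun h : R => h^-1 *: (((c \o g) \o shift t) (h *: 1) - (c \o g) t))
   = c \o (fun h : R => h^-1 *: ((g \o shift t) (h *: 1) - g t)).
  by apply: funext => h /=; rewrite cZ cB.
have cv : (fun h : R => h^-1 *: ((g \o shift t) (h *: 1) - g t)) @ (0:R)^' --> 'D_1 g t := dg.
have cv2 : (c \o (fun h : R => h^-1 *: ((g \o shift t) (h *: 1) - g t))) @ (0:R)^'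
    --> c ('D_1 g t).
  apply/cvgrPdist_lt => e e0.
  have : \forall h \near (0:R)^', `|'D_1 g t - h^-1 *: ((g \o shift t) (h *: 1) - g t)| < e.
    by move: e e0; apply/cvgrPdist_lt.
  by apply: filterS => h /=; rewrite -cB; apply: le_lt_trans.
split.
  by rewrite /derivable hq; apply/cvg_ex; exists (c ('D_1 g t)).
by rewrite /derive hq; exact: cvg_lim.
Qed.

Lemma affine_derive (V : normedModType R) (m v : V) :
  derivable (fun t : R => m + t *: v) 0 1 /\ 'D_1 (fun t : R => m + t *: v) 0 = v.
Proof.
have E : \forall h \near (0:R)^',
   h^-1 *: (((fun t : R => m + t *: v) \o shift 0) (h *: 1) - (m + 0 *: v)) = v.
  near=> h; have hn0 : h != 0 by near: h; exact: nbhs_dnbhs_neq.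
  by rewrite scale0r !addr0 addrAC subrr add0r [_%:A]mulr1 scalerA /shift addr0 mulVf // scale1r.
split; first by apply: (is_cvg_near_cst v).
by rewrite /derive; apply: lim_near_cst.
Unshelve. all: by end_near. Qed.

Lemma deriv_cont (f : R -> R) t : derivable f t 1 -> {for t, continuous f}.
Proof. by move=> d; apply: differentiable_continuous; apply/derivable1_diffP. Qed.

Lemma derivV_cont (V : normedModType R) (f : R -> V) t : derivable f t 1 -> {for t, continuous f}.
Proof. by move=> d; apply: differentiable_continuous; apply/derivable1_diffP. Qed.

Definition cq (i : nat) (m : Jt R) := cx (jq m) i.
Definition cp (i : nat) (m : Jt R) := cx (jp m) i.

Lemma cq_lin i : (i < 3)%N -> [/\ forall a b, cq i (a - b) = cq i a - cq i b,
  forall k a, cq i (k *: a) = k * cq i a & forall a, `|cq i a| <= `|a|].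
Proof.
move=> hi; split.
- by move=> a b; rewrite /cq -cxB.
- by move=> k a; rewrite /cq -cxZ.
- by move=> a; apply: le_trans (normJq a); exact: cx_norm.
Qed.
Lemma cp_lin i : (i < 3)%N -> [/\ forall a b, cp i (a - b) = cp i a - cp i b,
  forall k a, cp i (k *: a) = k * cp i a & forall a, `|cp i a| <= `|a|].
Proof.
move=> hi; split.
- by move=> a b; rewrite /cp -cxB.
- by move=> k a; rewrite /cp -cxZ.
- by move=> a; apply: le_trans (normJp a); exact: cx_norm.
Qed.
Lemma cz_lin : [/\ forall a b : Jt R, jz (a - b) = jz a - jz b,
  forall k (a : Jt R), jz (k *: a) = k * jz a & forall a : Jt R, `|jz a| <= `|a|].
Proof. by split => // a; exact: normJz. Qed.

Lemma sqb (a d : R) : `|d| <= 1 -> (a + d) ^+ 2 <= a ^+ 2 + `|d| * (2 * `|a| + 1).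
Proof.
move=> hd; have h1 := ler_norm (a * d).
rewrite normrM in h1.
have h2 : d ^+ 2 <= `|d|.
  rewrite -real_normK ?num_real //. 
  have := normr_ge0 d; nra.
have := normr_ge0 a; have := normr_ge0 d; nra.
Qed.

End Basics.

Section Main.
Variables (R : realType) (d0 : R) (K : set 'rV[R]_3) (rho : 'rV[R]_3 -> R).
Hypothesis Hd0 : 0 < d0.
Hypothesis HK : K = [set y | rho y <= 0].
Hypothesis Hsm : smooth3 rho.
Hypothesis Hgr : forall y, bdry K y -> grad rho y != 0.
Hypothesis Hfl : forall y, (bdry K y /\ cx y 0 ^+ 2 + cx y 1 ^+ 2 <= 3 ^+ 2 * d0 ^+ 2) <->
             (Edisk 3 d0 y).
Implicit Types (x y : 'rV[R]_3).

Local Notation S := (bdry K).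
Definition r2 y := cx y 0 ^+ 2 + cx y 1 ^+ 2.
Definition fl y := S y /\ r2 y < 3 ^+ 2 * d0 ^+ 2.

Lemma fl_sheet y : fl y -> cx y 2 = 1 \/ cx y 2 = -1.
Proof. by move=> [Sy hr]; have [+ _] := (Hfl y).1 (conj Sy (ltW hr)). Qed.

Lemma flat_S y : (cx y 2 = 1 \/ cx y 2 = -1) -> r2 y < 3 ^+ 2 * d0 ^+ 2 -> fl y.
Proof. by move=> hs hr; split => //; have [] := (Hfl y).2 (conj hs (ltW hr)). Qed.

Lemma rho_bd y : S y -> rho y = 0.
Proof.
move=> [Ky nint]; have : rho y <= 0 by move: Ky; rewrite HK.
rewrite le_eqVlt => /orP[/eqP //|neg]; exfalso; apply: nint.
have cr : {for y, continuous rho} := differentiable_continuous (Hsm [::] y).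
have nb : nbhs (rho y) [set r : R | r < 0].
  apply/nbhs_normP; exists (- rho y); first by rewrite oppr_gt0.
  move=> z hz /=; have := ler_norm (z - rho y); rewrite distrC; lra.
have H := cr _ nb; rewrite /interior HK /=; move: H.
move=> H; have H' : nbhs y [set z | rho z < 0] := H.
by apply: filterS H' => z /= hz; apply: ltW.
Qed.

Lemma cx_delta (i j : nat) : (i < 3)%N -> (j < 3)%N ->
  cx (delta_mx ord0 (inord j) : 'rV[R]_3) i = (i == j)%:R.
Proof.
move=> hi hj; rewrite /cx mxE eqxx /=; congr (_ %:R).
by rewrite -val_eqE /= !inordK.
Qed.

Lemma fl_move y v : fl y -> cx v 2 = 0 ->
  exists2 e, 0 < e & forall h, `|h| < e -> fl (y + h *: v).
Proof.
move=> fy v2; have hs := fl_sheet y fy; case: fy => Sy hr.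
set M := 3 ^+ 2 * d0 ^+ 2 - r2 y.
have M0 : 0 < M by rewrite /M subr_gt0.
set C := `|cx v 0| * (2 * `|cx y 0| + 1) + `|cx v 1| * (2 * `|cx y 1| + 1).
set D := `|cx v 0| + `|cx v 1| + 1.
have a0 := normr_ge0 (cx y 0); have a1 := normr_ge0 (cx y 1).
have a2 := normr_ge0 (cx v 0); have a3 := normr_ge0 (cx v 1).
have C0 : 0 <= C by rewrite /C; nra.
have D0 : 0 < D by rewrite /D; lra.
exists (Num.min (1 / D) (M / (2 * C + 1))).
  by rewrite lt_min /= !divr_gt0 //; lra.
move=> h; rewrite lt_min => /andP[h1 h2].
rewrite ltr_pdivlMr in h2; last by lra.
rewrite ltr_pdivlMr // in h1.
have hh := normr_ge0 h.
apply: flat_S; first by rewrite cxD cxZ v2 mulr0 addr0.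
rewrite /r2 !cxD !cxZ.
have b0 := sqb _ (cx y 0) (h * cx v 0).
have b1 := sqb _ (cx y 1) (h * cx v 1).
rewrite !normrM in b0 b1.
have e0 : `|h| * `|cx v 0| <= 1 by rewrite /D in h1; nra.
have e1 : `|h| * `|cx v 1| <= 1 by rewrite /D in h1; nra.
have hC : `|h| * C <= `|h| * (2 * C + 1) by nra.
have := b0 e0; have := b1 e1; move: h2 hC; rewrite /C /M /r2; lra.
Qed.

Lemma grad_flat y i : fl y -> (i < 2)%N -> cx (grad rho y) i = 0.
Proof.
move=> fy hi; have hi3 : (i < 3)%N by apply: leqW.
rewrite /grad /cx mxE.
set v := delta_mx ord0 (inord i) : 'rV[R]_3.
have v2 : cx v 2 = 0.
  by rewrite /v cx_delta //; case: i hi {hi3 v} => [|[|]].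
have [e e0 He] := fl_move y v fy v2.
rewrite /derive; apply: lim_near_cst => //; apply: near0_dnbhs.
apply/nbhs_normP; exists e => // h hh.
rewrite sub0r normrN in hh.
have [Sh _] := He h hh.
by rewrite /= (addrC (h *: v)) (rho_bd _ Sh) (rho_bd _ fy.1) subrr scaler0.
Qed.

Lemma nu_flat y : fl y -> [/\ cx (nu_of rho y) 0 = 0, cx (nu_of rho y) 1 = 0
   & cx (nu_of rho y) 2 ^+ 2 = 1].
Proof.
move=> fy; have g0 := grad_flat y 0 fy isT; have g1 := grad_flat y 1 fy isT.
have g2 : cx (grad rho y) 2 != 0.
  apply/eqP => g2; have := Hgr y fy.1.
  have -> : grad rho y = 0 by apply: rowP3; rewrite cx0.
  by rewrite eqxx.
have dg : dot3 (grad rho y) (grad rho y) = cx (grad rho y) 2 ^+ 2.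
  by rewrite dot3E g0 g1 !mul0r !add0r expr2.
rewrite /nu_of dg sqrtr_sqr !cxZ g0 g1 !mulr0; split => //.
rewrite exprMn exprVn -(real_normK (num_real (cx (grad rho y) 2))) mulVf //.
by rewrite expf_neq0 // normr_eq0.
Qed.

Lemma close_fl y0 y (dl : R) : 0 <= dl -> dl <= 1/2 ->
  dl * (2 * `|cx y0 0| + 2 * `|cx y0 1| + 2) < 3 ^+ 2 * d0 ^+ 2 - r2 y0 ->
  S y -> (forall i, (i < 3)%N -> `|cx y i - cx y0 i| < dl) ->
  fl y /\ ((cx y0 2 = 1 \/ cx y0 2 = -1) -> cx y 2 = cx y0 2).
Proof.
move=> dl0 dlh dM Sy hc.
have c0 := hc 0%N isT; have c1 := hc 1%N isT; have c2 := hc 2%N isT.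
have b0 := sqb _ (cx y0 0) (cx y 0 - cx y0 0).
have b1 := sqb _ (cx y0 1) (cx y 1 - cx y0 1).
rewrite (addrC (cx y0 0)) subrK in b0; rewrite (addrC (cx y0 1)) subrK in b1.
have a0 := normr_ge0 (cx y0 0); have a1 := normr_ge0 (cx y0 1).
have fy : fl y.
  split => //; rewrite /r2.
  have e0 : `|cx y 0 - cx y0 0| * (2 * `|cx y0 0| + 1) <= dl * (2 * `|cx y0 0| + 1) by nra.
  have e1 : `|cx y 1 - cx y0 1| * (2 * `|cx y0 1| + 1) <= dl * (2 * `|cx y0 1| + 1) by nra.
  have := b0 ltac:(lra); have := b1 ltac:(lra); move: dM; rewrite /r2; lra.
split => // hs; have := fl_sheet y fy; move: c2; rewrite ltr_norml.
move=> /andP[c2a c2b] hy.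
by case: hs => h0; case: hy => h1; rewrite h0 h1 in c2a c2b *; lra.
Qed.

Lemma sgn_cases (sgn : R) : (sgn = 1 \/ sgn = -1) -> sgn * sgn = 1.
Proof. by case=> ->; rewrite ?mulrNN mulr1. Qed.

Lemma J1_flat (m : Jt R) : fl (jq m) -> (J1 rho S m <-> cx (jp m) 2 = 0).
Proof.
move=> fq; have [n0 n1 n2] := nu_flat _ fq.
have n2' : cx (nu_of rho (jq m)) 2 != 0.
  by apply/eqP => h; move: n2; rewrite h expr0n /= => /eqP; rewrite eq_sym oner_eq0.
rewrite /J1 /= dot3E n0 n1 !mulr0 !add0r; split.
- by move=> [_ /eqP]; rewrite mulf_eq0 (negPf n2') orbF => /eqP.
- by move=> ->; rewrite mul0r; split => //; exact: fq.1.
Qed.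

Lemma H_flat (sgn : R) (m : Jt R) : (sgn = 1 \/ sgn = -1) ->
  Hset rho S sgn m -> fl (jq m) ->
  [/\ cx (jq m) 2 = sgn, cx (jq m) 0 = - sgn * cx (jp m) 1,
      cx (jq m) 1 = sgn * cx (jp m) 0 & cx (jp m) 2 = 0].
Proof.
move=> hsg [x [y [t [Sy [pos [yE mE]]]]]]; rewrite mE /jet_map /jq /jp /= => fy.
have [n0 n1 n2] := nu_flat _ fy.
have [y0 [y1 y2]] : [/\ cx y 0 = t * - cx x 1, cx y 1 = t * cx x 0 & cx y 2 = t].
  by rewrite yE !cxZ; have [-> -> ->] := cx_vec3 _ (- cx x 1) (cx x 0) 1; rewrite mulr1.
have ht : t = sgn.
  have h := fl_sheet _ fy; rewrite y2 in h.
  by case: hsg pos => -> pos; case: h => h; rewrite h in pos *; lra.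
move: n0 n1 n2; generalize (nu_of rho y) => nu n0 n1 n2.
rewrite !cxB !cxZ n0 n1 !mulr0 !subr0 y0 y1 y2 ht dot3E n0 n1 !mulr0 !add0r.
split => //; first by rewrite mulrN mulNr.
by rewrite -mulrA -expr2 n2 mulr1 subrr.
Qed.

Lemma H_build (sgn : R) q p z : (sgn = 1 \/ sgn = -1) -> fl q ->
  cx q 2 = sgn -> cx q 0 = - sgn * cx p 1 -> cx q 1 = sgn * cx p 0 ->
  cx p 2 = 0 -> Hset rho S sgn (q, p, z).
Proof.
move=> hsg fq q2 q0 q1 p2; have ss := sgn_cases _ hsg.
have [n0 n1 n2] := nu_flat _ fq.
set l := sgn * (z - cx p 0 * cx q 0 - cx p 1 * cx q 1).
set x := vec3 (cx p 0) (cx p 1) l.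
have [x0 x1 x2] := cx_vec3 _ (cx p 0) (cx p 1) l.
exists x, q, sgn; split; first exact: fq.1.
split; first by rewrite ss ltr01.
split.
  have [h0 h1 h2] := cx_vec3 _ (- cx x 1) (cx x 0) 1.
  apply: rowP3; rewrite !cxZ ?h0 ?h1 ?h2.
  - by rewrite q0 x1 mulrN mulNr.
  - by rewrite q1 x0.
  - by rewrite q2 mulr1.
rewrite /jet_map; move: n0 n1 n2; generalize (nu_of rho q) => nu n0 n1 n2.
congr (_, _, _).
  apply: rowP3; rewrite !cxB !cxZ ?n0 ?n1 ?mulr0 ?subr0 ?x0 ?x1 //.
  by rewrite p2 dot3E n0 n1 !mulr0 !add0r x2 -mulrA -expr2 n2 mulr1 subrr.
rewrite dot3E x0 x1 x2 q2 /l mulrAC ss mul1r.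
by ring.
Qed.


Definition fC (sgn : R) (c : Cn R 2) : Cn R 1 :=
  (\row_(j < 1) (c.1 ord0 (inord 1) - sgn * c.2 ord0 (inord 0)),
   \row_(j < 1) (c.2 ord0 (inord 1) + sgn * c.1 ord0 (inord 0))).

Lemma fC_lin sgn : linear (fC sgn).
Proof.
move=> a u v; rewrite /fC /=; congr (_, _); apply/rowP => j; rewrite !mxE /=; ring.
Qed.

Lemma fCB sgn (u v : Cn R 2) : fC sgn (u - v) = fC sgn u - fC sgn v.
Proof. by rewrite /fC /=; congr (_, _); apply/rowP => j; rewrite !mxE /=; ring. Qed.

Lemma entry_norm m n (M : 'M[R]_(m, n)) i j : `|M i j| <= `|M|.
Proof.
rewrite [X in _ <= X]/Num.Def.normr /= mx_normrE.
exact: (le_bigmax _ _ (i, j)).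
Qed.

Lemma rnorm_le n (M : 'M[R]_(1, n)) (b : R) : 0 <= b ->
  (forall j, `|M ord0 j| <= b) -> `|M| <= b.
Proof.
move=> b0 H; rewrite [X in X <= _]/Num.Def.normr /= mx_normrE.
apply: bigmax_le => // -[i j] _ /=; by rewrite (ord1 i).
Qed.

Lemma fC_bound sgn (v : Cn R 2) : (sgn = 1 \/ sgn = -1) -> `|fC sgn v| <= 2 * `|v|.
Proof.
move=> hs; have as1 : `|sgn| = 1 by case: hs => ->; rewrite ?normrN normr1.
have h1 : `|v.1| <= `|v| by rewrite prod_normE le_max lexx.
have h2 : `|v.2| <= `|v| by rewrite prod_normE le_max lexx orbT.
have e1 := entry_norm _ _ v.1 ord0 (inord 1); have e2 := entry_norm _ _ v.1 ord0 (inord 0).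
have e3 := entry_norm _ _ v.2 ord0 (inord 1); have e4 := entry_norm _ _ v.2 ord0 (inord 0).
have n0 := normr_ge0 v.
rewrite prod_normE ge_max; apply/andP; split; apply: rnorm_le => [|j]; rewrite ?mxE;
  try lra.
- apply: le_trans (ler_normB _ _) _; rewrite normrM as1 mul1r; lra.
- apply: le_trans (ler_normD _ _) _; rewrite normrM as1 mul1r; lra.
Qed.

Lemma fC_cont sgn : (sgn = 1 \/ sgn = -1) -> continuous (fC sgn).
Proof.
move=> hs c; apply/cvgrPdist_lt => e e0; apply/(@nbhs_normP _ ('rV[R]_2 * 'rV[R]_2)%type).
exists (e / 2); first by rewrite divr_gt0.
move=> d hd; rewrite -fCB; have := fC_bound sgn (c - d) hs; lra.
Qed.

Lemma chart1 (qp : TS R) j : (j < 2)%N -> (chart qp).1 ord0 (inord j) = cx qp.1 j.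
Proof.
move=> hj; rewrite /chart /= mxE /cx; congr (_ _ _); apply/val_inj.
by rewrite /= !inordK //; apply: leqW.
Qed.
Lemma chart2 (qp : TS R) j : (j < 2)%N -> (chart qp).2 ord0 (inord j) = cx qp.2 j.
Proof.
move=> hj; rewrite /chart /= mxE /cx; congr (_ _ _); apply/val_inj.
by rewrite /= !inordK //; apply: leqW.
Qed.

Lemma E2_fl q : Edisk 2 d0 q -> fl q.
Proof.
move=> [hs hr]; apply: flat_S => //; rewrite /r2.
apply: le_lt_trans hr _; rewrite !expr2; have := mulr_gt0 Hd0 Hd0; lra.
Qed.

Lemma part3 sgn s : (sgn = 1 \/ sgn = -1) -> (s = 1 \/ s = -1) ->
  complex_subvariety (sheet_image (TE rho 2 d0) s)
    (sheet_image (proj_set (Hk rho S sgn 2 d0)) s).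
Proof.
move=> hsg hs; have ss := sgn_cases _ hsg.
have AO : sheet_image (proj_set (Hk rho S sgn 2 d0)) s `<=` sheet_image (TE rho 2 d0) s.
  move=> c [qp [[m [[Hm [[Sq Jm] Em]] ->]] [s2 ->]]].
  by exists (jq m, jp m).
split => // a [qp [[m [[Hm TEm] qpE]] [s2 aE]]].
have fq : fl (jq m) := E2_fl _ TEm.2.
have [q2 q0 q1 p2] := H_flat sgn m hsg Hm fq.
have es : s = sgn by rewrite -s2 qpE /= q2.
subst s.
exists 1%N, setT, (fC sgn).
pose fL : {linear Cn R 2 -> Cn R 1} :=
  HB.pack (fC sgn) (GRing.isLinear.Build _ _ _ _ (fC sgn) (fC_lin sgn)).
have dL : forall c, 'd (fC sgn) c = fC sgn :> (Cn R 2 -> Cn R 1).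
  by move=> c; exact: (@diff_lin _ _ _ fL c (fC_cont _ hsg)).
split; first exact: openT.
split => //.
split.
  move=> c _; split; first exact: (@linear_differentiable _ _ _ fL c (fC_cont _ hsg)).
  move=> v; rewrite dL /fC /Jc /=; congr (_, _); apply/rowP => j; rewrite !mxE; ring.
split.
  move=> [w1 w2].
  exists (\row_(j < 2) ((val j == 1%N)%:R * w1 ord0 ord0),
          \row_(j < 2) ((val j == 1%N)%:R * w2 ord0 ord0)).
  rewrite dL /fC /=; congr (_, _); apply/rowP => j; rewrite !mxE !inordK //= (ord1 j).
    by rewrite mul1r mul0r mulr0 subr0.
  by rewrite mul1r mul0r mulr0 addr0.
move=> c _; split.
  move=> Ac; split; first exact: AO.
  move: Ac => [qp' [[m' [[Hm' TEm'] ->]] [s2' ->]]].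
  have fq' : fl (jq m') := E2_fl _ TEm'.2.
  have [q2' q0' q1' p2'] := H_flat sgn m' hsg Hm' fq'.
  rewrite /fC !chart1 // !chart2 //; congr (_, _); apply/rowP => j; rewrite !mxE /=.
    by rewrite q1' subrr.
  by rewrite q0' mulrA mulrN ss mulN1r subrr.
move=> [[[q p] [[Eq Dq] [q2' ->]]] f0].
have e1 := congr1 (fun c : Cn R 1 => c.1 ord0 ord0) f0.
have e2 := congr1 (fun c : Cn R 1 => c.2 ord0 ord0) f0.
rewrite /fC !chart1 // !chart2 // /= !mxE in e1 e2.
have fq' := E2_fl _ Eq.
have J : J1 rho S (q, p, 0) by split => //; exact: fq'.1.
have p2' := (J1_flat (q, p, 0) fq').1 J.
exists (q, p); split; last by split.
exists (q, p, 0); split => //; split; last by split.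
apply: H_build => //=.
- by rewrite q2' qpE /= q2.
- have -> : cx p 1 = - sgn * cx q 0 by lra.
  by rewrite mulrA mulrNN ss mul1r.
- lra.
Qed.


Local Notation X := (J1 rho S).

Lemma jq_aff (a b : Jt R) k : jq (a + k *: b) = jq a + k *: jq b. Proof. by []. Qed.
Lemma jp_aff (a b : Jt R) k : jp (a + k *: b) = jp a + k *: jp b. Proof. by []. Qed.
Lemma jz_aff (a b : Jt R) k : jz (a + k *: b) = jz a + k * jz b. Proof. by []. Qed.

Lemma dq_le (m1 m2 : Jt R) i : (i < 3)%N -> `|cx (jq m1) i - cx (jq m2) i| <= `|m1 - m2|.
Proof. by move=> hi; have [cB _ cN] := cq_lin R i hi; have := cN (m1 - m2); by rewrite cB. Qed.
Lemma dp_le (m1 m2 : Jt R) i : (i < 3)%N -> `|cx (jp m1) i - cx (jp m2) i| <= `|m1 - m2|.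
Proof. by move=> hi; have [cB _ cN] := cp_lin R i hi; have := cN (m1 - m2); by rewrite cB. Qed.

Lemma exists_dl y0 : r2 y0 < 3 ^+ 2 * d0 ^+ 2 -> exists dl : R, [/\ 0 < dl, dl <= 1/2 &
  dl * (2 * `|cx y0 0| + 2 * `|cx y0 1| + 2) < 3 ^+ 2 * d0 ^+ 2 - r2 y0].
Proof.
move=> hr; set M := 3 ^+ 2 * d0 ^+ 2 - r2 y0; set N := 2 * `|cx y0 0| + 2 * `|cx y0 1| + 2.
have M0 : 0 < M by rewrite /M subr_gt0.
have N0 : 0 < N by rewrite /N; have := normr_ge0 (cx y0 0); have := normr_ge0 (cx y0 1); lra.
exists (Num.min (1/2) (M / (2 * N))); split.
- by rewrite lt_min !divr_gt0 //; lra.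
- by rewrite ge_min lexx.
- have h : Num.min (1/2) (M / (2 * N)) <= M / (2 * N) by rewrite ge_min lexx orbT.
  have h2 : M / (2 * N) * N = M / 2 by field; lra.
  have := ler_wpM2r (ltW N0) h; rewrite h2; lra.
Qed.

Lemma abs_le_2d0 (a : R) : a ^+ 2 <= 2 ^+ 2 * d0 ^+ 2 -> `|a| <= 2 * d0.
Proof.
move=> h; have n := normr_ge0 a; rewrite -(real_normK (num_real a)) in h.
rewrite leNgt; apply/negP => H.
have h1 : 0 < `|a| - 2 * d0 by lra.
have h2 : 0 < `|a| + 2 * d0 by apply: ltr_wpDl n _; rewrite mulr_gt0.
have := mulr_gt0 h1 h2; move: h; rewrite !expr2; nra.
Qed.

Lemma dl_unif : exists dl : R, 0 < dl /\ forall y0, r2 y0 <= 2 ^+ 2 * d0 ^+ 2 ->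
  dl <= 1/2 /\ dl * (2 * `|cx y0 0| + 2 * `|cx y0 1| + 2) < 3 ^+ 2 * d0 ^+ 2 - r2 y0.
Proof.
set D := Num.min (1/2) (d0 ^+ 2 / (4 * d0 + 1)).
have hd : 0 < d0 := Hd0.
have dD : 0 < 4 * d0 + 1 by lra.
exists D; split; first by rewrite lt_min !divr_gt0 ?exprn_gt0 //; lra.
move=> y0 hr; split; first by rewrite ge_min lexx.
have h : D <= d0 ^+ 2 / (4 * d0 + 1) by rewrite ge_min lexx orbT.
have D0 : 0 <= D by rewrite le_min !divr_ge0 ?exprn_ge0 //; lra.
have a0 : `|cx y0 0| <= 2 * d0.
  by apply: abs_le_2d0; move: hr; rewrite /r2; have := sqr_ge0 (cx y0 1); lra.
have a1 : `|cx y0 1| <= 2 * d0.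
  by apply: abs_le_2d0; move: hr; rewrite /r2; have := sqr_ge0 (cx y0 0); lra.
have e1 : D * (2 * `|cx y0 0| + 2 * `|cx y0 1| + 2) <= D * (2 * (4 * d0 + 1)) by nra.
have e2 : D * (4 * d0 + 1) <= d0 ^+ 2.
  by have := ler_wpM2r (ltW dD) h; rewrite mulfVK //; lra.
have := mulr_gt0 Hd0 Hd0; rewrite -expr2 => dd.
lra.
Qed.

Lemma derive_near_cst (f : R -> R) t d : 0 < d ->
  (forall s, `|s - t| < d -> f s = f t) -> 'D_1 f t = 0.
Proof.
move=> d0' H; rewrite /derive; apply: lim_near_cst => //; apply: near0_dnbhs.
apply/nbhs_normP; exists d => // h hh; rewrite sub0r normrN in hh.
by rewrite /= H ?subrr ?scaler0 // [_%:A]mulr1 addrK.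
Qed.

Lemma tangent_affine (m v : Jt R) : X m -> fl (jq m) -> cx (jq v) 2 = 0 ->
  cx (jp v) 2 = 0 -> tangent_cone X m v.
Proof.
move=> Xm fq qv2 pv2; have [e e0 He] := fl_move (jq m) (jq v) fq qv2.
have p2 := (J1_flat m fq).1 Xm.
have [da Da] := affine_derive _ _ m v.
exists (fun t => m + t *: v), e; split => //; split; first by rewrite scale0r addr0.
split => // t ht; have ft := He t ht.
apply/(J1_flat (m + t *: v) ft); rewrite jp_aff cxD cxZ p2 pv2; lra.
Qed.

Lemma tangent_flat (m w : Jt R) : X m -> fl (jq m) -> tangent_cone X m w ->
  cx (jq w) 2 = 0 /\ cx (jp w) 2 = 0.
Proof.
move=> Xm fq [g [e [e0 [g0 [Hg [dg Dg]]]]]].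
have [dl [dl0 dlh dlM]] := exists_dl _ fq.2.
have [d1 d10 Hd1] := cont_eps _ _ _ _ (derivV_cont _ _ _ _ dg) dl dl0.
set d := Num.min e d1.
have d0' : 0 < d by rewrite lt_min e0.
have near s : `|s - 0| < d -> fl (jq (g s)) /\ cx (jq (g s)) 2 = cx (jq m) 2 /\ cx (jp (g s)) 2 = 0.
  rewrite subr0 => hs; move: hs; rewrite lt_min => /andP[hse hsd].
  have Xs := Hg s hse.
  have hc : `|g 0 - g s| < dl by apply: Hd1; rewrite sub0r normrN.
  have [fs shs] := close_fl (jq m) (jq (g s)) dl (ltW dl0) dlh dlM Xs.1
     ltac:(move=> i hi; rewrite -g0 distrC; apply: le_lt_trans (dq_le _ _ _ hi) hc).
  split => //; split; first exact: shs (fl_sheet _ fq).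
  exact: (J1_flat _ fs).1 Xs.
have [cB cZ cN] := cq_lin R 2 isT.
have [pB pZ pN] := cp_lin R 2 isT.
have [_ Dq] := lin_derive _ _ _ g 0 cB cZ cN dg.
have [_ Dp] := lin_derive _ _ _ g 0 pB pZ pN dg.
rewrite Dg in Dq Dp; rewrite /cq /cp in Dq Dp.
split.
  rewrite -Dq; apply: (derive_near_cst _ _ d) => // s hs.
  by have [_ [h _]] := near s hs; rewrite /= h g0.
rewrite -Dp; apply: (derive_near_cst _ _ d) => // s hs.
have [_ [_ h]] := near s hs; have [_ [_ h0]] := near 0 ltac:(by rewrite subrr normr0).
by rewrite /= h h0.
Qed.

Lemma reeb_flat Rf m : reeb_field X Rf -> X m -> fl (jq m) -> Rf m = (0, 0, 1).
Proof.
move=> HR Xm fq; have [tr [ar dr]] := HR m Xm.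
have [t2q t2p] := tangent_flat m (Rf m) Xm fq tr.
have [u00 u01 u02] := cx_vec3 R 1 0 0; have [u10 u11 u12] := cx_vec3 R 0 1 0.
have z2 := cx0 R 2.
have T1 := dr _ (tangent_affine m (vec3 1 0 0, 0, 0) Xm fq u02 z2).
have T2 := dr _ (tangent_affine m (vec3 0 1 0, 0, 0) Xm fq u12 z2).
have T3 := dr _ (tangent_affine m (0, vec3 1 0 0, 0) Xm fq z2 u02).
have T4 := dr _ (tangent_affine m (0, vec3 0 1 0, 0) Xm fq z2 u12).
move: t2q t2p ar T1 T2 T3 T4; case: (Rf m) => [[a b] c].
rewrite /dalpha /alpha /jq /jp /jz /= !dot3E !cx0 u00 u01 u02 u10 u11 u12.
move=> a2 b2 ar T1 T2 T3 T4.
have a0 : cx a 0 = 0 by lra.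
have a1 : cx a 1 = 0 by lra.
have b0 : cx b 0 = 0 by lra.
have b1 : cx b 1 = 0 by lra.
rewrite a0 a1 a2 !mulr0 !addr0 subr0 in ar.
by congr (_, _, _); [apply: rowP3; rewrite ?cx0 | apply: rowP3; rewrite ?cx0 | lra].
Qed.

Lemma const_on_ball (f : R -> R) (t d : R) :
  (forall u : R, `|u - t| < d -> is_derive u 1 f 0) ->
  forall s, `|s - t| < d -> f s = f t.
Proof.
move=> H s hs.
have key a b : a <= b -> `|a - t| < d -> `|b - t| < d -> f b = f a.
  move=> ab ha hb.
  have inb (x : R) : a <= x <= b -> `|x - t| < d.
    move: ha hb; rewrite !ltr_norml => /andP[ha1 ha2] /andP[hb1 hb2] /andP[x1 x2].
    apply/andP; split; lra.
  have Hd : forall x : R, x \in `]a, b[%R -> is_derive x 1 f ((fun=> 0) x).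
    move=> x; rewrite in_itv /= => /andP[x1 x2]; apply: H; apply: inb.
    by rewrite !ltW.
  have Hc : {within `[a, b], continuous f}.
    apply: derivable_within_continuous => x; rewrite in_itv /= => hx.
    by have := H x (inb x hx); case.
  have [c _ E] := MVT_segment ab Hd Hc.
  by move: E; rewrite mul0r => /eqP; rewrite subr_eq0 => /eqP.
have dpos : 0 < d by apply: le_lt_trans (normr_ge0 _) hs.
have ht : `|t - t| < d by rewrite subrr normr0.
case: (leP s t) => st.
  by rewrite (key s t st hs ht).
by rewrite (key t s (ltW st) ht hs).
Qed.

Lemma reeb_main sgn Rf (g : R -> Jt R) (T : R) : (sgn = 1 \/ sgn = -1) ->
  reeb_field X Rf -> 0 < T ->
  (forall t, `|t| < T -> X (g t) /\ derivable g t 1 /\ 'D_1 g t = Rf (g t)) ->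
  Hk rho S sgn 2 d0 (g 0) -> forall t, `|t| < T -> Hk rho S sgn 2 d0 (g t).
Proof.
move=> hsg HR T0 Hg H0.
pose P := fun t => (jq (g t), jp (g t)).
have deriv0 (u : R) i : `|u| < T -> fl (jq (g u)) -> (i < 3)%N ->
    is_derive u 1 (cq R i \o g) 0 /\ is_derive u 1 (cp R i \o g) 0.
  move=> hu fu hi; have [Xu [du Du]] := Hg u hu.
  have E := reeb_flat Rf (g u) HR Xu fu.
  have [cB cZ cN] := cq_lin R i hi; have [pB pZ pN] := cp_lin R i hi.
  have dq := lin_derive _ _ _ g u cB cZ cN du.
  have dp := lin_derive _ _ _ g u pB pZ pN du.
  by rewrite Du E /cq /cp /= cx0 in dq dp.
have LC (t : R) : `|t| < T -> fl (jq (g t)) ->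
    exists2 d : R, 0 < d & forall s : R, `|s - t| < d -> P s = P t.
  move=> ht ft.
  have [dl [dl0 dlh dlM]] := exists_dl _ ft.2.
  have [d1 d10 Hd1] := cont_eps _ _ _ _ (derivV_cont _ _ _ _ (Hg t ht).2.1) dl dl0.
  set d := Num.min d1 (T - `|t|).
  have dpos : 0 < d by rewrite lt_min d10 /= subr_gt0.
  have good (u : R) : `|u - t| < d -> `|u| < T /\ fl (jq (g u)).
    rewrite lt_min => /andP[h1 h2].
    have hu : `|u| < T.
      have := ler_normD (u - t) t; rewrite subrK; lra.
    split => //; have Xu := (Hg u hu).1.
    have hc : `|g t - g u| < dl by apply: Hd1; rewrite distrC.
    have [fu _] := close_fl (jq (g t)) (jq (g u)) dl (ltW dl0) dlh dlM Xu.1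
      ltac:(move=> i hi; rewrite distrC; apply: le_lt_trans (dq_le _ _ _ hi) hc).
    exact: fu.
  exists d => // s hs.
  have cst i : (i < 3)%N -> cx (jq (g s)) i = cx (jq (g t)) i /\ cx (jp (g s)) i = cx (jp (g t)) i.
    move=> hi; split.
      apply: (const_on_ball (cq R i \o g) t d) => // u hu.
      by have [h1 h2] := good u hu; have [] := deriv0 u i h1 h2 hi.
    apply: (const_on_ball (cp R i \o g) t d) => // u hu.
    by have [h1 h2] := good u hu; have [] := deriv0 u i h1 h2 hi.
  have [c0 c0'] := cst 0%N isT; have [c1 c1'] := cst 1%N isT; have [c2 c2'] := cst 2%N isT.
  by rewrite /P (rowP3 _ _ _ c0 c1 c2) (rowP3 _ _ _ c0' c1' c2').
have fl0 : fl (jq (g 0)) := E2_fl _ H0.2.2.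
have r20 : r2 (jq (g 0)) <= 2 ^+ 2 * d0 ^+ 2 := H0.2.2.2.
pose A := [set t : R | `|t| < T].
have cA : connected A.
  have -> : A = [set` `]-T, T[%R].
    by apply/seteqP; split => x; rewrite /A /= in_itv /= ltr_norml.
  by apply/connected_intervalP; exact: interval_is_interval.
pose B := [set t : R | A t /\ P t = P 0].
have BA : B = A.
  apply: cA.
  - by exists 0; split => //; rewrite /A /= normr0.
  - exists [set t : R | exists2 d : R, 0 < d & forall s : R, `|s - t| < d -> `|s| < T -> P s = P 0].
    + rewrite openE => t [d d0' Hd]; apply/nbhs_normP; exists (d / 2); first by rewrite divr_gt0.
      move=> u hu; exists (d / 2); first by rewrite divr_gt0.
      move=> s hs hsT; apply: Hd hsT.
      have := ler_distD u s t; rewrite (distrC u t); lra.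
    + apply/seteqP; split.
      * move=> t [At Pt]; split => //.
        have ft : fl (jq (g t)) by have := congr1 fst Pt; rewrite /P /= => ->.
        have [d d0' Hd] := LC t At ft.
        by exists d => // s hs _; rewrite Hd.
      * move=> t [At [d d0' Hd]]; split => //; apply: Hd => //.
        by rewrite subrr normr0.
  - exists (closure B); first exact: closed_closure.
    apply/seteqP; split.
    + by move=> t Bt; split; [exact: Bt.1 | exact: subset_closure].
    + move=> t [At cBt].
      have [dl [dl0 hdl]] := dl_unif; have [dlh dlM] := hdl _ r20.
      have [d1 d10 Hd1] := cont_eps _ _ _ _ (derivV_cont _ _ _ _ (Hg t At).2.1) dl dl0.
      have [u [[Au Pu] hu]] : exists u, (B `&` [set u | `|t - u| < d1]) u.
        by apply: cBt; apply/nbhs_normP; exists d1.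
      have qu : jq (g u) = jq (g 0) by have := congr1 fst Pu.
      have hc : `|g t - g u| < dl by apply: Hd1.
      have [ft _] := close_fl (jq (g 0)) (jq (g t)) dl (ltW dl0) dlh dlM ((Hg t At).1.1)
        ltac:(move=> i hi; rewrite -qu; apply: le_lt_trans (dq_le _ _ _ hi) hc).
      have [d d0' Hd] := LC t At ft.
      have [v [[Av Pv] hv]] : exists v, (B `&` [set v | `|t - v| < d]) v.
        by apply: cBt; apply/nbhs_normP; exists d.
      split => //; rewrite -Pv; symmetry; apply: Hd.
      by rewrite distrC.
move=> t ht.
have Bt : B t by rewrite BA.
have Pt : P t = P 0 := Bt.2.
have eq : jq (g t) = jq (g 0) by have := congr1 fst Pt.
have ep : jp (g t) = jp (g 0) by have := congr1 snd Pt.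
have [q2 q0 q1 p2] := H_flat sgn (g 0) hsg H0.1 fl0.
split; last by split; [exact: (Hg t ht).1 | rewrite eq; exact: H0.2.2].
have -> : g t = (jq (g t), jp (g t), jz (g t)) by case: (g t) => [[]].
by apply: H_build => //; rewrite ?eq ?ep.
Qed.

Lemma jt_eta (m : Jt R) : m = (jq m, jp m, jz m).
Proof. by case: m => [[]]. Qed.

Lemma shift_diff (m a s : Jt R) : (m + s) - (a + s) = m - a.
Proof. by rewrite opprD addrACA subrr addr0. Qed.

Lemma transverse_main sgn : (sgn = 1 \/ sgn = -1) ->
  transverse X (Hset rho S sgn) (rel_boundary X (TEx rho S 2 d0)).
Proof.
move=> hsg m Hm [Xm RB] w tw.
have ss := sgn_cases _ hsg.
have [dl [dl0 hdl]] := dl_unif.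
have dl2 : 0 < dl / 2 by rewrite divr_gt0.
have fq : fl (jq m).
  have [[a [[Ja Ea] ha]] _] := RB [set x | `|m - x| < dl / 2]
    ltac:(by apply/nbhs_normP; exists (dl / 2)).
  have [dlh dlM] := hdl _ Ea.2.
  move: ha => /= ha.
  have [fm _] := close_fl (jq a) (jq m) dl (ltW dl0) dlh dlM Xm.1
    ltac:(move=> i hi; apply: le_lt_trans (dq_le _ _ _ hi) _; lra).
  exact: fm.
have [t2q t2p] := tangent_flat m w Xm fq tw.
have [q2 q0 q1 p2] := H_flat sgn m hsg Hm fq.
set q' := jq w.
set ap := vec3 (sgn * cx q' 1) (- sgn * cx q' 0) 0.
have [ap0 ap1 ap2] := cx_vec3 R (sgn * cx q' 1) (- sgn * cx q' 0) 0.
set va : Jt R := (q', ap, jz w).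
set vb : Jt R := (0, jp w - ap, 0).
exists va, vb; split; [|split].
- have [e e0 He] := fl_move (jq m) q' fq t2q.
  have [da Da] := affine_derive _ _ m va.
  exists (fun t => m + t *: va), e; split => //; split; first by rewrite scale0r addr0.
  split => // t ht; rewrite (jt_eta (m + t *: va)) jq_aff jp_aff jz_aff.
  have ft := He t ht.
  apply: H_build => //; rewrite !cxD !cxZ ?ap0 ?ap1 ?ap2 /=.
  + by rewrite q2 t2q mulr0 addr0.
  + by rewrite q0; case: hsg => ->; ring.
  + by rewrite q1; case: hsg => ->; ring.
  + by rewrite p2 mulr0 addr0.
- have [da Da] := affine_derive _ _ m vb.
  exists (fun t => m + t *: vb), 1; split => //; split; first by rewrite scale0r addr0.
  split => // t _.
  have qE : jq (m + t *: vb) = jq m by rewrite jq_aff /= scaler0 addr0.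
  have vb2 : cx (jp vb) 2 = 0 by rewrite /= cxB t2p ap2 subrr.
  have Xt : X (m + t *: vb).
    by apply/(J1_flat (m + t *: vb) ltac:(by rewrite qE)); rewrite jp_aff cxD cxZ p2 vb2 mulr0 addr0.
  split => // U /(@nbhs_normP _ (Jt R)) [e1 e10 He1].
  set r := Num.min e1 (dl / 2).
  have r0 : 0 < r by rewrite lt_min e10 dl2.
  have [[a [[Ja Ea] ha]] [b [Xb [nb hb]]]] := RB [set x | `|m - x| < r]
    ltac:(by apply/nbhs_normP; exists r).
  move: ha hb => /= ha hb; move: ha hb; rewrite !lt_min => /andP[ha1 ha2] /andP[hb1 hb2].
  have fa : fl (jq a) := E2_fl _ Ea.
  have [dlh dlM] := hdl _ Ea.2.
  have [fb _] := close_fl (jq a) (jq b) dl (ltW dl0) dlh dlM Xb.1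
    ltac:(move=> i hi; apply: le_lt_trans (dq_le _ _ _ hi) _;
          have := ler_distD m b a; rewrite (distrC b m); lra).
  have qa : jq (a + t *: vb) = jq a by rewrite jq_aff /= scaler0 addr0.
  have qb : jq (b + t *: vb) = jq b by rewrite jq_aff /= scaler0 addr0.
  have pa := (J1_flat a fa).1 Ja.
  have pb := (J1_flat b fb).1 Xb.
  split.
  + exists (a + t *: vb); split.
      split; last by rewrite qa.
      by apply/(J1_flat (a + t *: vb) ltac:(by rewrite qa)); rewrite jp_aff cxD cxZ pa vb2 mulr0 addr0.
    by apply: He1; rewrite shift_diff.
  + exists (b + t *: vb); split.
      by apply/(J1_flat (b + t *: vb) ltac:(by rewrite qb)); rewrite jp_aff cxD cxZ pb vb2 mulr0 addr0.
    split; last by apply: He1; rewrite shift_diff.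
    by move=> [_ Eb]; apply: nb; split => //; rewrite -qb.
- rewrite [w in LHS]jt_eta; rewrite /va /vb /=.
  have -> : (q', ap, jz w) + (0, jp w - ap, 0) = (q' + 0, ap + (jp w - ap), jz w + 0) :> Jt R by [].
  by rewrite !addr0 (addrC ap) subrK.
Qed.


Lemma main_all :
  (forall sgn : R, (sgn = 1 \/ sgn = -1) ->
     transverse (J1 rho (bdry K)) (Hset rho (bdry K) sgn)
       (rel_boundary (J1 rho (bdry K)) (TEx rho (bdry K) 2 d0))) /\
  (forall sgn : R, (sgn = 1 \/ sgn = -1) ->
     reeb_invariant (J1 rho (bdry K)) (Hk rho (bdry K) sgn 2 d0)) /\
  (forall sgn s : R, (sgn = 1 \/ sgn = -1) -> (s = 1 \/ s = -1) ->
     complex_subvariety (sheet_image (TE rho 2 d0) s)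
       (sheet_image (proj_set (Hk rho (bdry K) sgn 2 d0)) s)).
Proof.
split; first exact: transverse_main.
split; last exact: part3.
move=> sgn hsg Rf HR g T T0 Hg H0.
exact: (reeb_main sgn Rf g T hsg HR T0 Hg H0).
Qed.

End Main.

Theorem lemma3p7 (R : realType) (d0 : R) (K : set 'rV[R]_3)
    (rho : 'rV[R]_3 -> R) :
  0 < d0 ->
  compact K -> is_convex K -> interior K 0 ->
  K = [set y | rho y <= 0] -> smooth3 rho ->
  (forall y, bdry K y -> grad rho y != 0) ->
  (forall y, bdry K y -> bdry K (reflect12 y)) ->
  (forall th y, bdry K y -> bdry K (rot3 th y)) ->
  (forall y, (bdry K y /\ cx y 0 ^+ 2 + cx y 1 ^+ 2 <= 3 ^+ 2 * d0 ^+ 2) <->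
             (Edisk 3 d0 y)) ->
  (forall sgn : R, (sgn = 1 \/ sgn = -1) ->
     transverse (J1 rho (bdry K)) (Hset rho (bdry K) sgn)
       (rel_boundary (J1 rho (bdry K)) (TEx rho (bdry K) 2 d0))) /\
  (forall sgn : R, (sgn = 1 \/ sgn = -1) ->
     reeb_invariant (J1 rho (bdry K)) (Hk rho (bdry K) sgn 2 d0)) /\
  (forall sgn s : R, (sgn = 1 \/ sgn = -1) -> (s = 1 \/ s = -1) ->
     complex_subvariety (sheet_image (TE rho 2 d0) s)
       (sheet_image (proj_set (Hk rho (bdry K) sgn 2 d0)) s)).
Proof.
move=> Hd0 _ _ _ HK Hsm Hgr _ _ Hfl.
by apply: main_all.
Qed.
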